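(* Let $M$ be an rfCGS with finite state set $St_M$, let $A$ be a coalition and $s_A=(s_{a_1},\ldots,s_{a_n})$ a natural resource-bounded strategy with recall for $A$ of complexity $k=\mathrm{compl}(s_A)$, where every action has an associated cost and each agent $a$ starts with a fixed non-refillable amount of resource $res(a)=r_a\in\mathbb{N}$. Let the goal be a temporal formula of the form $\varphi\,\mathbf{U}\,\psi$. Then, to decide whether $s_A$ enforces this objective from a state $st\in St_M$, it is sufficient to consider the tree unfolding of the executions prescribed by $s_A$ up to depth $L=|St_M|\cdot 2^{2k^2}\cdot\prod_{a\in A}(r_a+1)$.
   Context: A resource-bounded fuzzy concurrent game structure (rfCGS) is a tuple $(\mathrm{Ag},\mathrm{Ap},\{\mathrm{Act}_a\}_{a\in\mathrm{Ag}},St,st_I,\ell,d,t,res,consume)$: finite nonempty sets of agents, atomic propositions and actions; finite states $St$ with initial $st_I$; weight function $\ell:St\times\mathrm{Ap}\to[0,1]$; availability $d:\mathrm{Ag}\times St\to2^{\mathrm{Act}}$ (nonempty); transition function $t(st,\vec c)$ on joint available actions; non-refillable resource budgets $res:\mathrm{Ag}\to\mathbb{N}$; action costs $consume:\mathrm{Ag}\times\mathrm{Act}\to\mathbb{N}$, each executed action of agent $a$ consuming $consume(a,\alpha)$ from its remaining resource. A natural strategy with recall for agent $a$ is an ordered list of pairs $(r,\alpha)$ where $r$ is a regular expression (concatenation, union, Kleene star) over propositional formulas over $\mathrm{Ap}$ and $\alpha$ is an action available in the last state of every history consistent with $r$; a history $h=q_0\ldots q_n$ is consistent with $r$ if some word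 $w$ in the language of $r$ has $|w|=|h|$ and $q_j\models w[j]$ for all $j$. On a history, the agent plays the action of the first rule whose regular expression the history is consistent with. Its complexity is the total size of the regular expressions; a collective strategy's complexity is the sum over its members. The strategy enforces $\varphi\mathbf{U}\psi$ from $st$ if all paths from $st$ consistent with $s_A$ (other agents acting arbitrarily, within resource constraints) satisfy $\varphi\mathbf{U}\psi$. *)

(* Defs.v *)
From HB Require Import structures.
From mathcomp Require Import all_boot all_order all_algebra.
From Stdlib Require List.
Set Implicit Arguments. Unset Strict Implicit. Unset Printing Implicit Defensive.
Import Order.TTheory GRing.Theory Num.Theory.

Record rfCGS (R : Type) := {
  Ag : finType;
  Ap : finType;
  Act : finType;
  St : finType;
  st_I : St;
  ell : St -> Ap -> R;
  avail : Ag -> St -> {set Act};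
  trans : St -> {ffun Ag -> Act} -> St;
  res : Ag -> nat;
  consume : Ag -> Act -> nat
}.

Definition wf_rfCGS (R : realFieldType) (M : rfCGS R) : Prop :=
  [/\ 0 < #|Ag M|, 0 < #|Ap M|, 0 < #|Act M|,
      (forall (q : St M) p, (0 <= ell q p <= 1)%R)
    & (forall (a : Ag M) (q : St M), avail a q != set0)].

Inductive pform (P : Type) : Type :=
| PAtom of P
| PNeg of pform P
| PAnd of pform P & pform P
| POr of pform P & pform P.

Fixpoint pf_size (P : Type) (f : pform P) : nat :=
  match f with
  | PAtom _ => 1
  | PNeg g => (pf_size g).+1
  | PAnd g h => (pf_size g + pf_size h).+1
  | POr g h => (pf_size g + pf_size h).+1
  end.

Fixpoint fval (R : realFieldType) (M : rfCGS R) (q : St M) (f : pform (Ap M)) : R :=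
  match f with
  | PAtom p => ell q p
  | PNeg g => (1 - fval q g)%R
  | PAnd g h => Num.min (fval q g) (fval q h)
  | POr g h => Num.max (fval q g) (fval q h)
  end.

(* q |= f, for a given acceptance criterion [holds] on truth degrees
   (e.g. fun x => x == 1, fun x => 0 < x, fun x => theta <= x). *)
Definition psat (R : realFieldType) (M : rfCGS R) (holds : R -> bool)
  (q : St M) (f : pform (Ap M)) : Prop := holds (fval q f).

Inductive regex (G : Type) : Type :=
| RAtom of G
| RCat of regex G & regex G
| RUnion of regex G & regex G
| RStar of regex G.

Inductive lang (G : Type) : regex G -> list G -> Prop :=
| lang_atom g : lang (RAtom g) [:: g]
| lang_cat r1 r2 w1 w2 : lang r1 w1 -> lang r2 w2 -> lang (RCat r1 r2) (w1 ++ w2)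
| lang_unionl r1 r2 w : lang r1 w -> lang (RUnion r1 r2) w
| lang_unionr r1 r2 w : lang r2 w -> lang (RUnion r1 r2) w
| lang_star_nil r : lang (RStar r) [::]
| lang_star_app r w1 w2 : lang r w1 -> lang (RStar r) w2 -> lang (RStar r) (w1 ++ w2).

Fixpoint re_size (P : Type) (r : regex (pform P)) : nat :=
  match r with
  | RAtom f => pf_size f
  | RCat r1 r2 => (re_size r1 + re_size r2).+1
  | RUnion r1 r2 => (re_size r1 + re_size r2).+1
  | RStar r1 => (re_size r1).+1
  end.

Definition hist_consistent (R : realFieldType) (M : rfCGS R) (holds : R -> bool)
  (h : seq (St M)) (r : regex (pform (Ap M))) : Prop :=
  exists w, lang r w /\ List.Forall2 (psat holds) h w.

Definition nstrategy (R : realFieldType) (M : rfCGS R) :=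
  seq (regex (pform (Ap M)) * Act M).

Definition plays (R : realFieldType) (M : rfCGS R) (holds : R -> bool)
  (s : nstrategy M) (h : seq (St M)) (alpha : Act M) : Prop :=
  exists pre r post,
    s = pre ++ (r, alpha) :: post /\ hist_consistent holds h r /\
    (forall r' b, List.In (r', b) pre -> ~ hist_consistent holds h r').

Definition wf_nstrategy (R : realFieldType) (M : rfCGS R) (holds : R -> bool)
  (a : Ag M) (s : nstrategy M) : Prop :=
  forall r alpha, List.In (r, alpha) s ->
    forall q h, hist_consistent holds (q :: h) r -> alpha \in avail a (last q h).

Definition compl (R : realFieldType) (M : rfCGS R) (A : {set Ag M})
  (s : Ag M -> nstrategy M) : nat :=
  \sum_(a in A) \sum_(rl <- s a) re_size rl.1.

(* Agents outside A act
   arbitrarily (their resources are not bounded, as in RB-ATL). *)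
Definition consistent_hist (R : realFieldType) (M : rfCGS R) (holds : R -> bool)
  (A : {set Ag M}) (s : Ag M -> nstrategy M) (st : St M) (h : seq (St M)) : Prop :=
  exists h', h = st :: h' /\
  exists cs : nat -> {ffun Ag M -> Act M},
    (forall j, j < size h' ->
       [/\ (forall a, cs j a \in avail a (nth st h j)),
           (forall a, a \in A -> plays holds (s a) (take j.+1 h) (cs j a))
         & trans (nth st h j) (cs j) = nth st h j.+1]) /\
    (forall a, a \in A -> \sum_(j < size h') consume a (cs j a) <= res a).

Definition consistent_path (R : realFieldType) (M : rfCGS R) (holds : R -> bool)
  (A : {set Ag M}) (s : Ag M -> nstrategy M) (st : St M) (p : nat -> St M) : Prop :=
  forall n, consistent_hist holds A s st (mkseq p n.+1).

Definition until_path (T : Type) (phi psi : T -> bool) (p : nat -> T) : Prop :=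
  exists i, psi (p i) /\ forall j, j < i -> phi (p j).

Definition until_hist (T : Type) (x0 : T) (phi psi : T -> bool) (h : seq T) : Prop :=
  exists i, i < size h /\ psi (nth x0 h i) /\ forall j, j < i -> phi (nth x0 h j).

Definition enforces (R : realFieldType) (M : rfCGS R) (holds : R -> bool)
  (A : {set Ag M}) (s : Ag M -> nstrategy M) (phi psi : St M -> bool) (st : St M) : Prop :=
  forall p, consistent_path holds A s st p -> until_path phi psi p.

(* Main.v *)
Require Import Defs.
From HB Require Import structures.
From mathcomp Require Import all_boot all_order all_algebra.
From Stdlib Require List ClassicalEpsilon Classical.
Set Implicit Arguments. Unset Strict Implicit. Unset Printing Implicit Defensive.


Section Sem.
Variables (R : realFieldType) (M : rfCGS R) (holds : R -> bool).
Local Notation St := (St M).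
Local Notation rx := (regex (pform (Ap M))).

Definition Lsem (r : rx) (x : seq St) : Prop := hist_consistent holds x r.

Lemma Lsem_atom f x : Lsem (RAtom f) x -> exists q, x = [:: q].
Proof.
case=> w [Hw HF]; inversion Hw; subst.
case: x HF => [|q [|z x]] HF; [by inversion HF| by exists q|].
inversion HF; subst. match goal with H : List.Forall2 _ _ [::] |- _ => inversion H end.
Qed.

Lemma Lsem_atomI f q : Lsem (RAtom f) [:: q] -> Lsem (RAtom f) ([:: q] ++ [::]).
Proof. by rewrite cats0. Qed.

Lemma Lsem_cat r1 r2 x : Lsem (RCat r1 r2) x ->
  exists x1 x2, x = x1 ++ x2 /\ Lsem r1 x1 /\ Lsem r2 x2.
Proof.
case=> w [Hw HF]; inversion Hw; subst.
have [l1 [l2 [G1 [G2 ->]]]] := List.Forall2_app_inv_r _ _ HF.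
exists l1, l2; split=> //; split; [exists w1|exists w2]; by [].
Qed.

Lemma Lsem_catI r1 r2 x1 x2 : Lsem r1 x1 -> Lsem r2 x2 -> Lsem (RCat r1 r2) (x1 ++ x2).
Proof.
case=> w1 [H1 F1] [w2 [H2 F2]]; exists (w1 ++ w2); split; first exact: lang_cat.
exact: List.Forall2_app.
Qed.

Lemma Lsem_union r1 r2 x : Lsem (RUnion r1 r2) x -> Lsem r1 x \/ Lsem r2 x.
Proof.
case=> w [Hw HF]; inversion Hw; subst; [left|right]; by exists w.
Qed.

Lemma Lsem_unionl r1 r2 x : Lsem r1 x -> Lsem (RUnion r1 r2) x.
Proof. case=> w [H F]; exists w; split=> //; exact: lang_unionl. Qed.
Lemma Lsem_unionr r1 r2 x : Lsem r2 x -> Lsem (RUnion r1 r2) x.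
Proof. case=> w [H F]; exists w; split=> //; exact: lang_unionr. Qed.

Lemma Lsem_starI r x1 x2 : Lsem r x1 -> Lsem (RStar r) x2 -> Lsem (RStar r) (x1 ++ x2).
Proof.
case=> w1 [H1 F1] [w2 [H2 F2]]; exists (w1 ++ w2); split; first exact: lang_star_app.
exact: List.Forall2_app.
Qed.

Lemma Lsem_star_ne r x : Lsem (RStar r) x -> x = [::] \/
  exists x1 x2, x1 <> [::] /\ x = x1 ++ x2 /\ Lsem r x1 /\ Lsem (RStar r) x2.
Proof.
case=> w [Hw HF].
remember (RStar r) as rr eqn:Err.
elim: Hw x Err HF => //.
- move=> r0 x [->] HF. inversion HF. by left.
- move=> r0 w1 w2 H1 _ H2 IH x [Er] HF; subst r0.
  have [l1 [l2 [F1 [F2 ->]]]] := List.Forall2_app_inv_r _ _ HF.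
  case: l1 F1 => [|y l1] F1.
  + exact: IH.
  + right; exists (y :: l1), l2; split=> //; split=> //; split; first by exists w1.
    by exists w2.
Qed.

Lemma cat_split (T : Type) (h u x1 x2 : seq T) : h ++ u = x1 ++ x2 ->
  (exists u1, x1 = h ++ u1 /\ u = u1 ++ x2) \/
  (exists h2, h2 <> [::] /\ h = x1 ++ h2 /\ x2 = h2 ++ u).
Proof.
elim: h x1 => [|y h IH] [|z x1] /=.
- move=> ->; left; by exists [::].
- move=> ->; left; by exists (z :: x1).
- move=> <-; right; by exists (y :: h).
- case=> -> /IH [[u1 [-> ->]]|[h2 [H2 [-> ->]]]]; [left; by exists u1|right; by exists h2].
Qed.

Definition catL (X : seq St -> Prop) (Y : seq St -> Prop) : seq St -> Prop :=
  fun u => exists u1 u2, u = u1 ++ u2 /\ X u1 /\ Y u2.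

Fixpoint fam (r : rx) : seq (seq St -> Prop) :=
  match r with
  | RAtom _ => [:: fun u => u = [::]]
  | RCat r1 r2 => map (fun X => catL X (Lsem r2)) (fam r1) ++ fam r2
  | RUnion r1 r2 => fam r1 ++ fam r2
  | RStar r1 => map (fun X => catL X (Lsem (RStar r1))) (fam r1)
  end.

Lemma pf_size_gt0 (P : Type) (f : pform P) : 0 < pf_size f.
Proof. by case: f. Qed.

Lemma size_fam r : size (fam r) <= re_size r.
Proof.
elim: r => [f|r1 IH1 r2 IH2|r1 IH1 r2 IH2|r1 IH1] /=.
- exact: pf_size_gt0.
- rewrite size_cat size_map; apply: leqW; exact: leq_add.
- rewrite size_cat; apply: leqW; exact: leq_add.
- rewrite size_map; exact: leqW.
Qed.

Lemma In_map_f (A B : Type) (f : A -> B) x l : List.In x l -> List.In (f x) (map f l).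
Proof. exact: List.in_map. Qed.

Lemma keyK r : forall h u, h <> [::] -> Lsem r (h ++ u) ->
  exists X, List.In X (fam r) /\ X u /\ forall v, X v -> Lsem r (h ++ v).
Proof.
elim: r => [f|r1 IH1 r2 IH2|r1 IH1 r2 IH2|r1 IH1] h u hne.
- move=> Hs; have [q Hq] := Lsem_atom Hs.
  case: h hne Hq Hs => [//|y [|z h]] _ //=.
  case=> -> Hu; subst u => Hs.
  exists (fun u => u = [::]); split; first by left.
  split=> // v ->; by [].
- move=> /Lsem_cat [x1 [x2 [E [H1 H2]]]].
  case: (cat_split E) => [[u1 [Ex1 Eu]]|[h2 [Hh2 [Eh Ex2]]]].
  + subst x1 u. have [X [HX [Xu Xs]]] := IH1 _ _ hne H1.
    exists (catL X (Lsem r2)); split.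
      apply: List.in_or_app; left; exact: In_map_f.
    split; first by exists u1, x2.
    move=> v; rewrite /catL; move=> [v1 [v2 [-> [Xv1 Hv2]]]]; rewrite catA; exact: Lsem_catI (Xs _ Xv1) Hv2.
  + subst h x2. have [X [HX [Xu Xs]]] := IH2 _ _ Hh2 H2.
    exists X; split; first by apply: List.in_or_app; right.
    split=> // v Xv; rewrite -catA; exact: Lsem_catI H1 (Xs _ Xv).
- move=> /Lsem_union [H|H].
  + have [X [HX [Xu Xs]]] := IH1 _ _ hne H.
    exists X; split; first by apply: List.in_or_app; left.
    split=> // v Xv; exact/Lsem_unionl/Xs.
  + have [X [HX [Xu Xs]]] := IH2 _ _ hne H.
    exists X; split; first by apply: List.in_or_app; right.
    split=> // v Xv; exact/Lsem_unionr/Xs.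
- move: (ltnSn (size h)); move: {2}(size h).+1 => n.
  elim: n h u hne => [//|n IHn] h u hne Hsz Hs.
  case: (Lsem_star_ne Hs) => [E|[x1 [x2 [Hx1 [E [H1 H2]]]]]].
    by move: (f_equal size E); rewrite size_cat; case: h hne {Hsz Hs E}.
  case: (cat_split E) => [[u1 [Ex1 Eu]]|[h2 [Hh2 [Eh Ex2]]]].
  + subst x1 u. have [X [HX [Xu Xs]]] := IH1 _ _ hne H1.
    exists (catL X (Lsem (RStar r1))); split; first exact: In_map_f.
    split; first by exists u1, x2.
    move=> v; rewrite /catL; move=> [v1 [v2 [-> [Xv1 Hv2]]]]; rewrite catA; exact: Lsem_starI (Xs _ Xv1) Hv2.
  + rewrite Eh; rewrite Eh in Hsz; subst x2.
    have Hsz2 : size h2 < n.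
      rewrite size_cat in Hsz; move: Hsz; case: x1 Hx1 {E H1 Eh} => [//|y x1] _ /=.
      rewrite ltnS addSn => Hle; apply: leq_trans Hle; rewrite ltnS; exact: leq_addl.
    have [X [HX [Xu Xs]]] := IHn _ _ Hh2 Hsz2 H2.
    exists X; split=> //; split=> // v Xv; rewrite -catA; exact: Lsem_starI H1 (Xs _ Xv).
Qed.

End Sem.


Definition pb (P : Prop) : bool :=
  if ClassicalEpsilon.excluded_middle_informative P then true else false.
Lemma pbP (P : Prop) : pb P = true <-> P.
Proof. by rewrite /pb; case: ClassicalEpsilon.excluded_middle_informative. Qed.

Lemma nth_error_lt (T : Type) (l : seq T) n x : List.nth_error l n = Some x -> n < size l.
Proof. elim: l n => [|y l IH] [|n] //= H; rewrite ltnS; exact: IH H. Qed.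

Lemma sum_ord_mono (F : nat -> nat) m n : m <= n -> \sum_(i < m) F i <= \sum_(i < n) F i.
Proof.
move=> hmn; rewrite (big_ord_widen n F hmn) big_mkcond /=.
apply: leq_sum => i _; by case: ifP.
Qed.

Section Main.
Variables (R : realFieldType) (M : rfCGS R) (holds : R -> bool)
  (A : {set Ag M}) (s : Ag M -> nstrategy M).
Local Notation St := (St M).
Local Notation Lsem := (Lsem holds).

Definition eqv a (x y : seq St) : Prop :=
  forall r al, List.In (r, al) (s a) -> forall u, Lsem r (x ++ u) <-> Lsem r (y ++ u).

Lemma eqv_refl a x : eqv a x x. Proof. by []. Qed.
Lemma eqv_sym a x y : eqv a x y -> eqv a y x.
Proof. move=> H r al Hin u; by rewrite (H r al Hin u). Qed.
Lemma eqv_trans a x y z : eqv a x y -> eqv a y z -> eqv a x z.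
Proof. move=> H1 H2 r al Hin u; by rewrite (H1 r al Hin u) (H2 r al Hin u). Qed.
Lemma eqv_rcons a x y q : eqv a x y -> eqv a (rcons x q) (rcons y q).
Proof. move=> H r al Hin u; rewrite !cat_rcons; exact: (H r al Hin (q :: u)). Qed.

Lemma In_cat (T : Type) (x : T) l1 l2 : List.In x l1 -> List.In x (l1 ++ l2).
Proof. move=> H; apply: List.in_or_app; by left. Qed.

Lemma plays_eqv a x y al : eqv a x y -> plays holds (s a) x al -> plays holds (s a) y al.
Proof.
move=> H [pre [r [post [Es [Hc Hpre]]]]].
have Hin : forall r' b, List.In (r', b) pre -> List.In (r', b) (s a).
  move=> r' b Hi; rewrite Es; exact: In_cat.
have E0 : forall r' b, List.In (r', b) (s a) -> (Lsem r' x <-> Lsem r' y).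
  move=> r' b Hi; have := H r' b Hi [::]; by rewrite !cats0.
exists pre, r, post; split=> //; split.
- apply/(E0 r al)=> //; rewrite Es; apply: List.in_or_app; right; by left.
- move=> r' b Hi Hc'; apply: (Hpre r' b Hi); exact/(E0 r' b (Hin _ _ Hi)).
Qed.

Definition ka a := \sum_(rl <- s a) re_size rl.1.

Lemma ka_size a : size (s a) <= ka a.
Proof.
rewrite /ka; elim: (s a) => [|rl l IH]; first by rewrite big_nil.
rewrite big_cons /=; case: rl => r al /=.
have : 0 < re_size r by case: r => //= f; exact: pf_size_gt0.
move=> H; rewrite -add1n; exact: leq_add.
Qed.

Lemma ka_in a r al : List.In (r, al) (s a) -> re_size r <= ka a.
Proof.
rewrite /ka; elim: (s a) => [//|rl l IH] /= [E|Hi]; rewrite big_cons.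
- subst rl => /=; exact: leq_addr.
- apply: leq_trans (IH Hi) _; exact: leq_addl.
Qed.

Definition Pbit a (x : seq St) (i j : nat) : Prop :=
  exists r al X, List.nth_error (s a) i = Some (r, al) /\
    List.nth_error (fam holds r) j = Some X /\ forall v, X v -> Lsem r (x ++ v).

Lemma bits_eqv1 a x y : x <> [::] ->
  (forall i j, i < ka a -> j < ka a -> Pbit a x i j -> Pbit a y i j) ->
  forall r al, List.In (r, al) (s a) -> forall u, Lsem r (x ++ u) -> Lsem r (y ++ u).
Proof.
move=> xne Hb r al Hin u Hs.
have [X [HX [Xu Xs]]] := keyK xne Hs.
have [i Hi] := List.In_nth_error _ _ Hin.
have [j Hj] := List.In_nth_error _ _ HX.
have ilt : i < ka a := leq_trans (nth_error_lt Hi) (ka_size a).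
have jlt : j < ka a := leq_trans (leq_trans (nth_error_lt Hj) (size_fam _ _)) (ka_in Hin).
have [r' [al' [X' [Hi' [Hj' HX']]]]] : Pbit a y i j.
  apply: Hb => //; by exists r, al, X.
move: Hi'; rewrite Hi => -[Er Ea]; subst r' al'.
move: Hj'; rewrite Hj => -[EX]; subst X'.
exact: HX'.
Qed.


Fixpoint fw (j1 j2 n : nat) : nat :=
  match n with
  | 0 => 0
  | n'.+1 => if (fw j1 j2 n').+1 == j2 then j1 else (fw j1 j2 n').+1
  end.

Lemma fw_lt j1 j2 n : j1 < j2 -> fw j1 j2 n < j2.
Proof.
move=> lt12; elim: n => [|n IH] /=; first exact: leq_ltn_trans lt12.
case: eqP => // /eqP ne; by rewrite ltn_neqAle ne IH.
Qed.

Lemma fw_le j1 j2 n : j1 < j2 -> fw j1 j2 n <= n.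
Proof.
move=> lt12; elim: n => [|n IH] //=.
case: eqP => [E|_]; last by rewrite ltnS.
apply: ltnW; apply: leq_trans lt12 _; rewrite -E ltnS; exact: IH.
Qed.

Lemma fw_id j1 j2 n : n < j2 -> fw j1 j2 n = n.
Proof.
elim: n => [|n IH] //= H.
rewrite IH ?(ltnW H) //; case: eqP => // E; by rewrite E ltnn in H.
Qed.

Lemma pump (phi psi : St -> bool) (st : St) (h0 : seq St)
  (cs : nat -> {ffun Ag M -> Act M})
  (Hcs : forall j, j < size h0 ->
       [/\ (forall a, cs j a \in avail a (nth st (st :: h0) j)),
           (forall a, a \in A -> plays holds (s a) (take j.+1 (st :: h0)) (cs j a))
         & trans (nth st (st :: h0) j) (cs j) = nth st (st :: h0) j.+1])
  (Hres : forall a, a \in A -> \sum_(j < size h0) consume a (cs j a) <= res a)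
  (j1 j2 : nat) (lt12 : j1 < j2) (le2 : j2 <= size h0)
  (Fst : nth st (st :: h0) j1 = nth st (st :: h0) j2)
  (Fres : forall a, a \in A -> \sum_(t < j1) consume a (cs t a) = \sum_(t < j2) consume a (cs t a))
  (Feqv : forall a, a \in A -> eqv a (take j1.+1 (st :: h0)) (take j2.+1 (st :: h0))) :
  enforces holds A s phi psi st -> until_hist st phi psi (st :: h0).
Proof.
move=> Henf.
set h := st :: h0.
set f := fw j1 j2.
have fS : forall n, f n.+1 = if (f n).+1 == j2 then j1 else (f n).+1 by [].
have flt : forall n, f n < j2 by move=> n; exact: fw_lt.
have fle : forall n, f n <= n by move=> n; exact: fw_le.
have fid : forall n, n < j2 -> f n = n by move=> n; exact: fw_id.
have flth : forall n, f n < size h0 by move=> n; exact: leq_trans (flt n) le2.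
set p := fun n => nth st h (f n).
have Hsum : forall a, a \in A -> forall N,
    \sum_(j < N) consume a (cs (f j) a) = \sum_(t < f N) consume a (cs t a).
  move=> a Ha; elim=> [|N IH]; first by rewrite !big_ord0.
  have step : \sum_(t < (f N).+1) consume a (cs t a) =
      \sum_(t < f N) consume a (cs t a) + consume a (cs (f N) a) by rewrite big_ord_recr.
  rewrite big_ord_recr /= IH fS -step; case: eqP => [E|_] //; by rewrite E Fres.
have Heqv : forall a, a \in A -> forall n, eqv a (mkseq p n.+1) (take (f n).+1 h).
  move=> a Ha; elim=> [|n IH].
  rewrite /h /p /mkseq /= (fid 0) ?take0; [exact: eqv_refl| exact: leq_ltn_trans lt12].
  rewrite mkseqS; set q := p n.+1.
  apply: eqv_trans (eqv_rcons q IH) _.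
  rewrite /q /p fS; case: eqP => [E|_].
  - rewrite Fst -E -take_nth; last by rewrite /h /= ltnS (flth n).
    rewrite E; exact: eqv_sym (Feqv a Ha).
  - rewrite -take_nth; first exact: eqv_refl.
    by rewrite /h /= ltnS (flth n).
have Htrans : forall n, trans (nth st h (f n)) (cs (f n)) = p n.+1.
  move=> n; have [_ _ ->] := Hcs _ (flth n).
  rewrite /p fS; case: eqP => // E; by rewrite E -Fst.
have Hpath : consistent_path holds A s st p.
  move=> N.
  have E0 : mkseq p N.+1 = st :: behead (mkseq p N.+1) by [].
  exists (behead (mkseq p N.+1)); split; first exact: E0.
  exists (fun j => cs (f j)); split.
  - move=> j; rewrite size_behead size_mkseq => jlt.
    have [Hav Hpl _] := Hcs _ (flth j).
    have nthp : forall i, i <= N -> nth st (mkseq p N.+1) i = p i.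
      by move=> i hi; rewrite nth_mkseq.
    rewrite (nthp j (ltnW jlt)) (nthp j.+1 jlt).
    split.
    + move=> a; exact: Hav.
    + move=> a Ha.
      have -> : take j.+1 (mkseq p N.+1) = mkseq p j.+1.
        by rewrite /mkseq -map_take take_iota; congr map; congr iota; apply/minn_idPl; rewrite ltnS ltnW.
      apply: plays_eqv (eqv_sym (Heqv a Ha j)) _; exact: Hpl.
    + exact: Htrans.
  - move=> a Ha; rewrite size_behead size_mkseq /= Hsum //.
    apply: leq_trans (Hres a Ha); exact: (sum_ord_mono (fun t => consume a (cs t a)) (ltnW (flth N))).
have [i [Hpsi Hphi]] := Henf p Hpath.
exists (f i); split; first by rewrite /h /= ltnS ltnW.
split; first exact: Hpsi.
move=> j jlt.
have jlt2 : j < j2 := ltn_trans jlt (flt i).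
rewrite -(fid j jlt2); apply: Hphi; exact: leq_trans jlt (fle i).
Qed.

End Main.


Lemma foldr_prod (I : finType) (F : I -> nat) :
  foldr muln 1 [seq F x | x : I] = \prod_(x : I) F x.
Proof.
have -> : foldr muln 1 [seq F x | x : I] = \prod_(x <- enum I) F x.
  rewrite /image_mem; elim: (enum I) => [|y l IH]; first by rewrite big_nil.
  by rewrite big_cons /= IH.
by rewrite big_enum.
Qed.

Lemma sum_sq (I : finType) (P : pred I) (F : I -> nat) :
  \sum_(i in P) F i * F i <= (\sum_(i in P) F i) ^ 2.
Proof.
rewrite expnS expn1 big_distrl /=; apply: leq_sum => i Pi.
apply: leq_mul => //; rewrite (bigD1 i) //=; exact: leq_addr.
Qed.

Unset Implicit Arguments.

Theorem proposition2 (R : realFieldType) (M : rfCGS R) (HM : wf_rfCGS M)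
  (holds : R -> bool) (A : {set Ag M}) (s : Ag M -> nstrategy M)
  (Hs : forall a, a \in A -> wf_nstrategy holds a (s a))
  (phi psi : St M -> bool) (st : St M) :
  let k := compl A s in
  let L := (#|St M| * 2 ^ (2 * k ^ 2) * \prod_(a in A) (res a).+1)%N in
  enforces holds A s phi psi st <->
  (forall h, consistent_hist holds A s st h -> size h = L.+1 ->
     until_hist st phi psi h).
Proof.
move=> k L; split; last first.
  move=> H p Hp.
  have [i [ilt [Hpsi Hphi]]] := H (mkseq p L.+1) (Hp L) (size_mkseq _ _).
  rewrite size_mkseq in ilt.
  exists i; split; first by rewrite nth_mkseq in Hpsi.
  move=> j jlt; have := Hphi j jlt; rewrite nth_mkseq //; exact: ltn_trans jlt ilt.
move=> Henf h [h0 [Eh [cs [Hcs Hres]]]] Hsz; subst h.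
have sz0 : size h0 = L by move: Hsz => /= [].
pose res' a := if a \in A then res a else 0.
pose ka' a := if a \in A then ka s a else 0.
pose T := fun a => (('I_(res' a).+1 * {ffun ('I_(ka' a) * 'I_(ka' a))%type -> bool})%type : finType).
pose C := ((St M * {dffun forall a, T a})%type : finType).
pose cfg (i : 'I_L.+1) : C :=
  (nth st (st :: h0) i,
   @finfun (Ag M) T (fun a =>
     ((inord (\sum_(t < i) consume a (cs t a)) : 'I_(res' a).+1),
      [ffun xy : ('I_(ka' a) * 'I_(ka' a))%type =>
         pb (Pbit holds s a (take i.+1 (st :: h0)) xy.1 xy.2)]))).
have cardC : #|C| <= L.
  rewrite /C card_prod card_dep_ffun foldr_prod /L -mulnA leq_mul2l; apply/orP; right.
  have -> : \prod_(a : Ag M) #|T a| = \prod_(a : Ag M) ((res' a).+1 * 2 ^ (ka' a * ka' a)).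
    apply: eq_bigr => a _; by rewrite /T card_prod card_ord card_ffun card_bool card_prod !card_ord.
  rewrite big_split /= mulnC; apply: leq_mul.
  - rewrite -expn_sum; apply: leq_pexp2l => //.
    have -> : \sum_(a : Ag M) ka' a * ka' a = \sum_(a in A) ka s a * ka s a.
      rewrite [RHS]big_mkcond /=; apply: eq_bigr => a _; by rewrite /ka'; case: (a \in A).
    apply: leq_trans (sum_sq _ _) _.
    have -> : \sum_(a in A) ka s a = k by [].
    by rewrite mul2n -addnn leq_addr.
  - rewrite [X in _ <= X]big_mkcond /=; apply: eq_leq; apply: eq_bigr => a _.
    by rewrite /res'; case: (a \in A).
have ninj : ~ injective cfg.
  move=> inj; have := @leq_card _ _ cfg inj; rewrite card_ord => H.
  have := leq_trans H cardC; by rewrite ltnn.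
suff key : forall i1 i2 : 'I_L.+1, (i1 < i2)%N -> cfg i1 = cfg i2 ->
    until_hist st phi psi (st :: h0).
  apply: Classical_Prop.NNPP => Hn; apply: ninj => x y Exy.
  apply: Classical_Prop.NNPP => Hne; apply: Hn.
  case: (ltngtP x y) => [lt|lt|/val_inj //].
  - exact: key lt Exy.
  - exact: key lt (esym Exy).
move=> i1 i2 lt E.
have le2 : (i2 <= size h0)%N by rewrite sz0 -ltnS.
have HB : forall a, a \in A -> forall x y : 'I_L.+1, cfg x = cfg y ->
    forall i j, i < ka s a -> j < ka s a ->
    Pbit holds s a (take x.+1 (st :: h0)) i j -> Pbit holds s a (take y.+1 (st :: h0)) i j.
  move=> a Ha x y Exy i j hi hj P1.
  have hi' : i < ka' a by rewrite /ka' Ha.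
  have hj' : j < ka' a by rewrite /ka' Ha.
  have := congr1 (fun c : C => (c.2 a).2 (Ordinal hi', Ordinal hj')) Exy.
  rewrite /cfg /= !ffunE /= => e.
  apply/pbP; rewrite -e; exact/pbP.
apply: (pump Hcs Hres lt le2) => //.
- exact: (congr1 fst E).
- move=> a Ha.
  have bnd : forall i : 'I_L.+1, \sum_(t < i) consume a (cs t a) < (res' a).+1.
    move=> i; rewrite /res' Ha ltnS; apply: leq_trans (Hres a Ha).
    apply: (sum_ord_mono (fun t => consume a (cs t a))); by rewrite sz0 -ltnS.
  have := congr1 (fun c : C => val ((c.2 a).1)) E.
  by rewrite /cfg /= !ffunE /= (inordK (bnd i1)) (inordK (bnd i2)).
- move=> a Ha r al Hin u; split.
  + apply: (bits_eqv1 _ (HB a Ha _ _ E)) Hin u => //.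
  + apply: (bits_eqv1 _ (HB a Ha _ _ (esym E))) Hin u => //.
Qed.
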